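(* Let $a,b$ be fixed nonzero complex constants, let $\{a_i\},\{b_i\},\{c_i\},\{d_i\}$ ($i\in\mathbb{Z}$) be complex sequences of nonzero numbers, and let $m,n\ge0$ be integers such that for $-n\le j\le m$ the quantities $(a_j+c_j)(a_j+\frac{b}{ac_j})$, $(a_j+d_j)(a_j+\frac{b}{ad_j})$, $(b_j-c_j)(1-\frac{b}{ab_jc_j})$, $(b_j-d_j)(1-\frac{b}{ab_jd_j})$ are nonzero. Then $$\sum_{k=-n}^{m}(a_k+b_k)\Big(a_k+\frac{b}{ab_k}\Big)(c_k-d_k)\Big(1-\frac{b}{ac_kd_k}\Big)\frac{\prod_{j=1}^{k-1}(a_j+c_j)(a_j+\frac{b}{ac_j})}{\prod_{j=1}^{k}(a_j+d_j)(a_j+\frac{b}{ad_j})}\frac{\prod_{j=1}^{k-1}(b_j-d_j)(1-\frac{b}{ab_jd_j})}{\prod_{j=1}^{k}(b_j-c_j)(1-\frac{b}{ab_jc_j})}$$ $$=\frac{\prod_{j=1}^{m}(a_j+c_j)(a_j+\frac{b}{ac_j})}{\prod_{j=1}^{m}(a_j+d_j)(a_j+\frac{b}{ad_j})}\frac{\prod_{j=1}^{m}(b_j-d_j)(1-\frac{b}{ab_jd_j})}{\prod_{j=1}^{m}(b_j-c_j)(1-\frac{b}{ab_jc_j})}-\frac{\prod_{j=-n}^{0}(a_j+d_j)(a_j+\frac{b}{ad_j})}{\prod_{j=-n}^{0}(a_j+c_j)(a_j+\frac{b}{ac_j})}\frac{\prod_{j=-n}^{0}(b_j-c_j)(1-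\frac{b}{ab_jc_j})}{\prod_{j=-n}^{0}(b_j-d_j)(1-\frac{b}{ab_jd_j})}.$$
   Context: Products over integer ranges follow the convention: $\prod_{j=k}^{m}A_j=A_k\cdots A_m$ if $m\ge k$; $=1$ if $m=k-1$; $=(A_{m+1}\cdots A_{k-1})^{-1}$ if $m\le k-2$. The constants $a,b$ are distinct objects from the sequences $a_k,b_k$. *)

(* Defs.v *)
From HB Require Import structures.
From mathcomp Require Import all_boot all_order all_algebra.
From mathcomp Require Import complex.
From mathcomp Require Import reals.
Set Implicit Arguments. Unset Strict Implicit. Unset Printing Implicit Defensive.
Import Order.TTheory GRing.Theory Num.Theory.
Local Open Scope ring_scope.

(* Products over integer ranges with the convention of the paper:
   prod_{j=k}^{m} A_j = A_k ... A_m        if m >= k,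
                      = 1                  if m = k-1,
                      = (A_{m+1} ... A_{k-1})^{-1}  if m <= k-2. *)
Definition iprod {F : fieldType} (A : int -> F) (k m : int) : F :=
  if (k <= m + 1)%R then \prod_(i < absz (m + 1 - k)%R) A (k + (i : nat)%:Z)
  else (\prod_(i < absz (k - 1 - m)%R) A (m + 1 + (i : nat)%:Z))^-1.

Definition isum {F : fieldType} (A : int -> F) (lo hi : int) : F :=
  \sum_(i < absz (hi + 1 - lo)%R | (lo <= hi)%R) A (lo + (i : nat)%:Z).

(* Main.v *)
Require Import Defs.
From HB Require Import structures.
From mathcomp Require Import all_boot all_order all_algebra.
From mathcomp Require Import complex.
From mathcomp Require Import reals.
From mathcomp Require Import zify ring lra.
Import Order.TTheory GRing.Theory Num.Theory.
Local Open Scope ring_scope.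

Lemma iprod_up {F : fieldType} (A : int -> F) s k : s <= k ->
  iprod A s k = iprod A s (k - 1) * A k.
Proof.
move=> hk; rewrite /iprod.
rewrite ifT; last by lia.
rewrite ifT; last by lia.
have -> : absz (k + 1 - s)%R = (absz (k - 1 + 1 - s)%R).+1 by lia.
rewrite big_ord_recr /=; congr (_ * A _); lia.
Qed.

Lemma iprod_neg {F : fieldType} (A : int -> F) s k : k < s ->
  iprod A s k = (\prod_(i < absz (s - 1 - k)%R) A (k + 1 + (i : nat)%:Z))^-1.
Proof.
move=> hk; rewrite /iprod; case: ifP => // h.
have -> : absz (k + 1 - s)%R = 0%N by lia.
have -> : absz (s - 1 - k)%R = 0%N by lia.
by rewrite !big_ord0 invr1.
Qed.

Lemma iprod_down {F : fieldType} (A : int -> F) s k : k < s -> A k != 0 ->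
  iprod A s k = iprod A s (k - 1) * A k.
Proof.
move=> hk hA; rewrite !iprod_neg; [|lia|lia].
have -> : absz (s - 1 - (k - 1))%R = (absz (s - 1 - k)%R).+1 by lia.
rewrite big_ord_recl /=.
have -> : k - 1 + 1 + 0 = k by lia.
under [X in (A k * X)^-1]eq_bigr => i _ do
  have -> : k - 1 + 1 + (bump 0 i)%:Z = k + 1 + (i : nat)%:Z by rewrite /bump /=; lia.
by rewrite invfM mulrAC mulVf // mul1r.
Qed.

Lemma iprodS {F : fieldType} (A : int -> F) s k : A k != 0 ->
  iprod A s k = iprod A s (k - 1) * A k.
Proof.
move=> hA; case: (lerP s k) => h; first exact: iprod_up.
exact: iprod_down.
Qed.
Lemma key (R : realType) (a b al be c d : R[i]) : a != 0 -> be != 0 -> c != 0 -> d != 0 ->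
  (al + be) * (al + b / (a * be)) * (c - d) * (1 - b / (a * c * d)) =
  (al + c) * (al + b / (a * c)) * ((be - d) * (1 - b / (a * be * d)))
  - (al + d) * (al + b / (a * d)) * ((be - c) * (1 - b / (a * be * c))).
Proof. move=> h1 h2 h3 h4; field; by rewrite h1 h2 h3 h4. Qed.

Lemma aux (F : fieldType) (G X Y Z W pc pd qc qd : F) : pd != 0 -> qc != 0 ->
  G = pc * qd - pd * qc ->
  G * (X / (Y * pd)) * (Z / (W * qc)) = X * pc / (Y * pd) * (Z * qd / (W * qc)) - X / Y * (Z / W).
Proof. move=> h1 h2 ->; rewrite !invfM; move: Y^-1 W^-1 => y w; field; by rewrite ?h1 ?h2. Qed.

Lemma tele (F : zmodType) (T : int -> F) lo N :
  \sum_(i < N.+1) (T (lo + (i : nat)%:Z) - T (lo + (i : nat)%:Z - 1)) = T (lo + N%:Z) - T (lo - 1).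
Proof.
elim: N => [|N IH]; rewrite big_ord_recr /= ?IH.
  by rewrite big_ord0 add0r addr0.
have -> : lo + N.+1%:Z - 1 = lo + N%:Z by lia.
by rewrite addrC addrA subrK.
Qed.

Lemma rng (m n j : nat) : (j < (m + n).+1)%N -> - n%:Z <= - n%:Z + j%:Z <= m%:Z.
Proof. move=> h; apply/andP; split; lia. Qed.

Lemma iprod_flip {F : fieldType} (A : int -> F) (n : nat) :
  iprod A 1 (- n%:Z - 1) = (iprod A (- n%:Z) 0)^-1.
Proof.
rewrite iprod_neg; last by lia.
rewrite /iprod ifT; last by lia.
have -> : absz (1 - 1 - (- n%:Z - 1))%R = absz (0 + 1 - (- n%:Z))%R by lia.
congr (_^-1); apply: eq_bigr => i _; congr A; by rewrite subrK.
Qed.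

Theorem corollary3p6 (R : realType) (a b : R[i])
  (as_ bs cs ds : int -> R[i]) (m n : nat) :
  a != 0 -> b != 0 ->
  (forall i, as_ i != 0) -> (forall i, bs i != 0) ->
  (forall i, cs i != 0) -> (forall i, ds i != 0) ->
  (forall j : int, - (n%:Z) <= j <= m%:Z ->
     [/\ (as_ j + cs j) * (as_ j + b / (a * cs j)) != 0,
         (as_ j + ds j) * (as_ j + b / (a * ds j)) != 0,
         (bs j - cs j) * (1 - b / (a * bs j * cs j)) != 0 &
         (bs j - ds j) * (1 - b / (a * bs j * ds j)) != 0]) ->
  let PC := fun j => (as_ j + cs j) * (as_ j + b / (a * cs j)) in
  let PD := fun j => (as_ j + ds j) * (as_ j + b / (a * ds j)) in
  let QC := fun j => (bs j - cs j) * (1 - b / (a * bs j * cs j)) in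
  let QD := fun j => (bs j - ds j) * (1 - b / (a * bs j * ds j)) in
  isum (fun k =>
      (as_ k + bs k) * (as_ k + b / (a * bs k)) * (cs k - ds k)
        * (1 - b / (a * cs k * ds k))
        * (iprod PC 1 (k - 1) / iprod PD 1 k)
        * (iprod QD 1 (k - 1) / iprod QC 1 k))
    (- (n%:Z)) (m%:Z)
  = iprod PC 1 m%:Z / iprod PD 1 m%:Z * (iprod QD 1 m%:Z / iprod QC 1 m%:Z)
    - iprod PD (- (n%:Z)) 0 / iprod PC (- (n%:Z)) 0
      * (iprod QC (- (n%:Z)) 0 / iprod QD (- (n%:Z)) 0).
Proof.
move=> ha hb has hbs hcs hds hne PC PD QC QD.
pose T k := iprod PC 1 k / iprod PD 1 k * (iprod QD 1 k / iprod QC 1 k).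
rewrite /isum.
have -> : (- n%:Z <= m%:Z) = true by lia.
have -> : absz (m%:Z + 1 - - n%:Z)%R = (m + n).+1 by lia.
rewrite (eq_bigr (fun i : 'I_(m + n).+1 => T (- n%:Z + (i : nat)%:Z) - T (- n%:Z + (i : nat)%:Z - 1))).
  rewrite tele.
  have -> : - n%:Z + (m + n)%N%:Z = m%:Z by lia.
  rewrite /T !iprod_flip !invrK.
  congr (_ - _); rewrite !(mulrC _^-1) //.
move=> i _.
set k := - n%:Z + (i : nat)%:Z.
have hk : - n%:Z <= k <= m%:Z.
  exact: rng (ltn_ord i).
case: (hne k hk) => h1 h2 h3 h4.
rewrite /T (@iprodS _ PC 1 k h1) (@iprodS _ PD 1 k h2) (@iprodS _ QC 1 k h3) (@iprodS _ QD 1 k h4).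
apply: aux => //.
exact: key.
Qed.
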